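(* Let $\mathcal{F}=(W,\preceq,\mathcal{V})$ be a finite poset model and $w_1,w_2\in W$. Then $w_1\equiv_\eta w_2$ if and only if $w_1\approx_\pm w_2$.
   Context: Fix a set PL of proposition letters. A poset model is $\mathcal{F}=(W,\preceq,\mathcal{V})$ with $(W,\preceq)$ a partial order and $\mathcal{V}:\mathrm{PL}\to\mathcal{P}(W)$. $[m;n]=\{i\in\mathbb{N}:m\le i\le n\}$, $[m;n)=\{i:m\le i<n\}$. An undirected path of length $\ell$ from $w$ is $\pi:[0;\ell]\to W$ with $\pi(0)=w$ and, for each $i\in[0;\ell)$, $\pi(i)\preceq\pi(i+1)$ or $\pi(i+1)\preceq\pi(i)$. A $\downarrow$-path is an undirected path of length $\ell\ge1$ with $\pi(\ell)\preceq\pi(\ell-1)$. A $\pm$-path is a $\downarrow$-path of length $\ell\ge2$ with $\pi(0)\preceq\pi(1)$. SLCS$_\eta$ formulas: $\Phi::=p\mid\neg\Phi\mid\Phi_1\wedge\Phi_2\mid\eta(\Phi_1,\Phi_2)$; $w\models p$ iff $w\in\mathcal{V}(p)$; negation, conjunction standard; $w\models\eta(\Phi_1,\Phi_2)$ iff some $\pm$-path $\pi:[0;\ell]\to W$ from $w$ has $\pi(\ell)\models\Phi_2$ and $\pi(i)\models\Phi_1$ for all $i\in[0;\ell)$. $w_1\equiv_\eta w_2$ means $w_1,w_2$ satisfy the same SLCS$_\eta$ formulas. A weak $\pm$-bisimulation is a symmetric relation $B\subseteq W\times W$ such that whenever $B(w_1,w_2)$: (1) for every $p$, $w_1\in\mathcal{V}(p)$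 iff $w_2\in\mathcal{V}(p)$; (2) for all $u_1,d_1\in W$ with ($w_1\preceq u_1$ or $u_1\preceq w_1$) and $d_1\preceq u_1$, there is a $\pm$-path $\pi_2:[0;\ell_2]\to W$ from $w_2$ with $B(d_1,\pi_2(\ell_2))$ and, for all $j\in[0;\ell_2)$, $B(w_1,\pi_2(j))$ or $B(u_1,\pi_2(j))$. $w_1\approx_\pm w_2$ iff some weak $\pm$-bisimulation contains $(w_1,w_2)$. *)

(* Defs.v *)
From mathcomp Require Import all_boot.
Set Implicit Arguments. Unset Strict Implicit. Unset Printing Implicit Defensive.

(* Paths are functions pi : nat -> W together
   with a length l; only the values pi 0, ..., pi l matter. *)

Section PosetModel.
Variables (PL : Type) (W : finType) (le : rel W) (V : PL -> W -> bool).

Definition undirected_path (pi : nat -> W) (l : nat) : Prop :=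
  forall i, i < l -> le (pi i) (pi i.+1) \/ le (pi i.+1) (pi i).

Definition down_path (pi : nat -> W) (l : nat) : Prop :=
  1 <= l /\ undirected_path pi l /\ le (pi l) (pi l.-1).

Definition pm_path (pi : nat -> W) (l : nat) : Prop :=
  2 <= l /\ down_path pi l /\ le (pi 0) (pi 1).

Inductive form : Type :=
  | Fatom of PL
  | Fneg of form
  | Fand of form & form
  | Feta of form & form.

Fixpoint sat (f : form) (w : W) : Prop :=
  match f with
  | Fatom p => V p w
  | Fneg g => ~ sat g w
  | Fand g h => sat g w /\ sat h w
  | Feta g h => exists (pi : nat -> W) (l : nat),
      pi 0 = w /\ pm_path pi l /\ sat h (pi l) /\
      (forall i, i < l -> sat g (pi i))
  end.

Definition eta_equiv (w1 w2 : W) : Prop :=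
  forall f : form, sat f w1 <-> sat f w2.

Definition weak_pm_bisimulation (B : W -> W -> Prop) : Prop :=
  (forall x y, B x y -> B y x) /\
  (forall w1 w2, B w1 w2 ->
     (forall p, V p w1 = V p w2) /\
     (forall u1 d1, (le w1 u1 \/ le u1 w1) -> le d1 u1 ->
        exists (pi2 : nat -> W) (l2 : nat),
          pi2 0 = w2 /\ pm_path pi2 l2 /\ B d1 (pi2 l2) /\
          (forall j, j < l2 -> B w1 (pi2 j) \/ B u1 (pi2 j)))).

Definition weak_pm_bisimilar (w1 w2 : W) : Prop :=
  exists B, weak_pm_bisimulation B /\ B w1 w2.

End PosetModel.

(* Main.v *)
Require Import Defs.
From mathcomp Require Import all_boot.
From mathcomp Require Import zify.
From Stdlib Require Import Classical.

Lemma eta_step (PL : Type) (W : finType) (le : rel W)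
  (le_refl : reflexive le) (V : PL -> W -> bool) (B : W -> W -> Prop)
  (HB : weak_pm_bisimulation le V B) (g h : form PL)
  (IHg : forall x y, B x y -> (sat le V g x <-> sat le V g y))
  (IHh : forall x y, B x y -> (sat le V h x <-> sat le V h y)) x y :
  B x y -> sat le V (Feta g h) x -> sat le V (Feta g h) y.
Proof.
move=> Bxy [pi [l [H0 [[Hl2 [[Hl1 [Hund Hlast]] Hfirst]] [Hh Hg]]]]].
have key: forall k, k <= l -> exists (rho : nat -> W) m, rho 0 = y /\
   undirected_path le rho m /\ B (pi k) (rho m) /\
   (forall j, j < m -> sat le V g (rho j)) /\
   ((k = 0 /\ m = 0) \/ (2 <= m /\ le (rho 0) (rho 1) /\ le (rho m) (rho m.-1))).
{ elim=> [|k IH] Hk.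
  - exists (fun _ => y), 0. split; first done.
    split; first by move=> i; rewrite ltn0.
    split; first by rewrite H0.
    split; first by move=> j; rewrite ltn0.
    by left.
  - have [rho [m [R0 [Rund [RB [Rg Rinv]]]]]] := IH (ltnW Hk).
    have [u [Hau [Hbu Hgu]]] : exists u, (le (pi k) u \/ le u (pi k)) /\
        le (pi k.+1) u /\ sat le V g u.
    { case Hba: (le (pi k.+1) (pi k)).
      - exists (pi k). split; first by left; apply le_refl.
        split; first done. by apply Hg.
      - exists (pi k.+1).
        have Hab : le (pi k) (pi k.+1).
        { by case: (Hund k Hk) => // H; rewrite H in Hba. }
        split; first by left.
        split; first by apply le_refl.
        apply Hg. have Hne : k.+1 <> l.
        { move=> E. move: Hlast. rewrite -E /=. by rewrite Hba. }
        lia. }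
    have [_ Hstep] := HB.2 _ _ RB.
    have [sig [l2 [S0 [[Sl2 [[Sl1 [Sund Slast]] Sfirst]] [SB Sg]]]]] :=
      Hstep u (pi k.+1) Hau Hbu.
    pose rho' := fun j => if j <= m then rho j else sig (j - m).
    have Er1 : forall j, j <= m -> rho' j = rho j.
    { by move=> j Hj; rewrite /rho' Hj. }
    have Er2 : forall j, m <= j -> rho' j = sig (j - m).
    { move=> j Hj; rewrite /rho'. case: ifP => H //.
      have -> : j = m by lia. by rewrite subnn S0. }
    exists rho', (m + l2). split; first by rewrite Er1.
    split.
    { move=> i Hi. case: (ltnP i m) => Him.
      - rewrite !Er1 //; [exact: Rund | exact: ltnW].
      - rewrite !Er2 //; last by lia.
        have -> : i.+1 - m = (i - m).+1 by lia.
        apply: Sund. lia. }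
    split.
    { rewrite Er2; last by lia. have -> : m + l2 - m = l2 by lia. done. }
    split.
    { move=> j Hj. case: (ltnP j m) => Hjm.
      - rewrite Er1; [exact: Rg | exact: ltnW].
      - rewrite Er2 //. have Hjl : j - m < l2 by lia.
        case: (Sg _ Hjl) => HB'.
        + by apply (IHg _ _ HB'); apply Hg; lia.
        + by apply (IHg _ _ HB'). }
    right. split; first by lia.
    split.
    { case: Rinv => [[_ Em] | [Hm [H01 _]]].
      - subst m. rewrite Er1 // Er2 // subn0 -S0. done.
      - rewrite Er1 // Er1; [done | lia]. }
    rewrite !Er2; try lia.
    have -> : m + l2 - m = l2 by lia.
    have -> : (m + l2).-1 - m = l2.-1 by lia.
    done. }
have [rho [m [R0 [Rund [RB [Rg Rinv]]]]]] := key l (leqnn l).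
exists rho, m. split; first done.
case: Rinv => [[E _] | [Hm [H01 Hl]]]; first by lia.
split.
  { split; first done. split; last done. split; first lia. by split. }
split; first by apply (IHh _ _ RB).
done.
Qed.

Lemma bisim_sat (PL : Type) (W : finType) (le : rel W)
  (le_refl : reflexive le) (V : PL -> W -> bool) (B : W -> W -> Prop)
  (HB : weak_pm_bisimulation le V B) (f : form PL) :
  forall x y, B x y -> (sat le V f x <-> sat le V f y).
Proof.
elim: f => [p|g IHg|g IHg h IHh|g IHg h IHh] x y Bxy.
- have [Hv _] := HB.2 x y Bxy. by rewrite /= Hv.
- move: (IHg x y Bxy) => /=; tauto.
- move: (IHg x y Bxy) (IHh x y Bxy) => /=; tauto.
- split; [exact: (eta_step _ _ _ le_refl _ _ HB _ _ IHg IHh _ _ Bxy) | exact: (eta_step _ _ _ le_refl _ _ HB _ _ IHg IHh _ _ (HB.1 _ _ Bxy))].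
Qed.

Lemma char_formula (PL : Type) (W : finType) (le : rel W) (V : PL -> W -> bool)
  (f0 : form PL) (w : W) : forall s : seq W, exists chi, sat le V chi w /\
  forall v, v \in s -> sat le V chi v -> eta_equiv le V w v.
Proof.
elim => [|v s [chi [Hw Hs]]].
- exists (Fneg (Fand f0 (Fneg f0))). split; first by simpl; tauto. by [].
- case: (classic (eta_equiv le V w v)) => Hwv.
  + exists chi. split=>//. move=> x; rewrite inE => /orP [/eqP -> _ | xs]; [done | exact: Hs].
  + have [f Hf] : exists f, sat le V f w /\ ~ sat le V f v.
    { apply: NNPP => Hn. apply: Hwv => f. split => Hf.
      - apply: NNPP => Hnv. apply Hn. by exists f.
      - apply: NNPP => Hnw. apply Hn. exists (Fneg f). simpl. tauto. }
    exists (Fand chi f). split; first by split; [done | exact: Hf.1].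
    move=> x; rewrite inE => /orP [/eqP -> [_ Hfv] | xs [Hx _]].
    * by exfalso; apply Hf.2.
    * exact: Hs.
Qed.

Lemma char_full (PL : Type) (W : finType) (le : rel W) (V : PL -> W -> bool)
  (f0 : form PL) (w : W) : exists chi, forall v,
  sat le V chi v <-> eta_equiv le V w v.
Proof.
have [chi [Hw Hs]] := char_formula _ _ le V f0 w (enum W).
exists chi => v; split; first by apply: Hs; rewrite mem_enum.
by move=> E; apply (E chi).
Qed.

Theorem theorem3 (PL : Type) (W : finType) (le : rel W)
  (le_refl : reflexive le) (le_anti : antisymmetric le) (le_trans : transitive le)
  (V : PL -> W -> bool) (w1 w2 : W) :
  eta_equiv le V w1 w2 <-> weak_pm_bisimilar le V w1 w2.
Proof.
split; last first.
{ move=> [B [HB Bw]] f. exact: (bisim_sat _ _ _ le_refl _ _ HB). }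
move=> H12. exists (eta_equiv le V). split; last done.
split.
{ move=> x y H f. by split => Hf; apply (H f). }
move=> x y Hxy. split.
{ move=> p. by apply/idP/idP => Hp; apply (Hxy (Fatom p)). }
move=> u1 d1 Hxu Hdu.
case: (classic (exists f0 : form PL, True)) => [[f0 _] | Hno]; last first.
{ exists (fun _ => y), 2. split; first done.
  split.
  { split; first done. split; last by apply le_refl.
    split; first done. split; first by move=> i _; left; apply le_refl.
    by apply le_refl. }
  split; first by move=> f; exfalso; apply Hno; exists f.
  by move=> j _; left => f; exfalso; apply Hno; exists f. }
have [cw Hcw] := char_full _ _ le V f0 x.
have [cu Hcu] := char_full _ _ le V f0 u1.
have [cd Hcd] := char_full _ _ le V f0 d1.
pose Phi1 := Fneg (Fand (Fneg cw) (Fneg cu)).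
have HP1 : forall v, sat le V Phi1 v <-> eta_equiv le V x v \/ eta_equiv le V u1 v.
{ move=> v. rewrite /Phi1 /= (Hcw v) (Hcu v). tauto. }
have Eself : forall z, eta_equiv le V z z by move=> z f.
have Hx : sat le V (Feta Phi1 cd) x.
{ case: Hxu => Hxu.
  - exists (fun i => nth d1 [:: x; u1] i), 2. split; first done.
    split.
    { split; first done. split; last done.
      split; first done. split; last done.
      move=> i Hi. case: i Hi => [|[|i]] //= _; [by left | by right]. }
    split; first by apply/Hcd.
    move=> i Hi; apply/HP1. case: i Hi => [|[|i]] //= _; [left | right]; apply Eself.
  - exists (fun i => nth d1 [:: x; x; u1] i), 3. split; first done.
    split.
    { split; first done. split; last by apply le_refl.
      split; first done. split; last done.
      move=> i Hi. case: i Hi => [|[|[|i]]] //= _; [left; apply le_refl | by right | by right]. }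
    split; first by apply/Hcd.
    move=> i Hi; apply/HP1. case: i Hi => [|[|[|i]]] //= _; [left | left | right]; apply Eself. }
have [pi [l [P0 [Ppm [Pd Pg]]]]] := (Hxy (Feta Phi1 cd)).1 Hx.
exists pi, l. split; first done. split; first done.
split; first by apply/Hcd.
move=> j Hj. by apply/HP1; apply Pg.
Qed.
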